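(* The class NFQ is not elementary (i.e. there is no set of first-order sentences in the language of groups whose models are exactly the NFQ groups), and it is not closed under infinite (Cartesian) products: there is an NFQ group $G$ (e.g. $G=\mathbb Q * \mathbb Q$) such that $G^{\omega}$ is not NFQ.
   Context: A group is called NFQ if it is nontrivial and has no proper subgroups of finite index (equivalently, it is nontrivial and has no nontrivial finite quotients). $\mathbb Q$ denotes the additive group of rationals, $*$ denotes free product, and $G^{\omega}$ denotes the Cartesian product of countably many copies of $G$. *)

(* Defs.v *)
From Stdlib Require Import List FunctionalExtensionality PeanoNat.
Import ListNotations.

Record group := Group {
  carrier :> Type;
  gmul : carrier -> carrier -> carrier;
  ginv : carrier -> carrier;
  gone : carrier;
  gmulA : forall x y z, gmul x (gmul y z) = gmul (gmul x y) z;
  gmul1 : forall x, gmul gone x = x;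
  gmulV : forall x, gmul (ginv x) x = gone
}.

Arguments gmul {g}.
Arguments ginv {g}.
Arguments gone {g}.

Definition is_subgroup (G : group) (H : G -> Prop) : Prop :=
  H gone /\ (forall x y, H x -> H y -> H (gmul x y)) /\ (forall x, H x -> H (ginv x)).

Definition finite_index (G : group) (H : G -> Prop) : Prop :=
  exists l : list G, forall x : G, exists g, In g l /\ H (gmul (ginv g) x).

Definition proper (G : group) (H : G -> Prop) : Prop := exists x : G, ~ H x.

Definition nontrivial (G : group) : Prop := exists x : G, x <> gone.

Definition NFQ (G : group) : Prop :=
  nontrivial G /\
  forall H : G -> Prop, is_subgroup G H -> finite_index G H -> ~ proper G H.

Section Pow.
Variable G : group.
Definition pw_mul (f g : nat -> G) : nat -> G := fun n => gmul (f n) (g n).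
Definition pw_inv (f : nat -> G) : nat -> G := fun n => ginv (f n).
Definition pw_one : nat -> G := fun _ => gone.
Lemma pw_mulA f g h : pw_mul f (pw_mul g h) = pw_mul (pw_mul f g) h.
Proof. apply functional_extensionality; intro n. unfold pw_mul. apply gmulA. Qed.
Lemma pw_mul1 f : pw_mul pw_one f = f.
Proof. apply functional_extensionality; intro n. unfold pw_mul, pw_one. apply gmul1. Qed.
Lemma pw_mulV f : pw_mul (pw_inv f) f = pw_one.
Proof. apply functional_extensionality; intro n. unfold pw_mul, pw_inv, pw_one. apply gmulV. Qed.
End Pow.

Definition pow_omega (G : group) : group :=
  @Group (nat -> G) (pw_mul G) (pw_inv G) (pw_one G)
         (pw_mulA G) (pw_mul1 G) (pw_mulV G).

Inductive term : Type :=
  | tvar : nat -> term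
  | tone : term
  | tmul : term -> term -> term
  | tinv : term -> term.

Inductive formula : Type :=
  | feq : term -> term -> formula
  | ffalse : formula
  | fnot : formula -> formula
  | fand : formula -> formula -> formula
  | f_or : formula -> formula -> formula
  | fimp : formula -> formula -> formula
  | fall : nat -> formula -> formula
  | fex : nat -> formula -> formula.

Fixpoint fv_term (t : term) : list nat :=
  match t with
  | tvar n => [n]
  | tone => []
  | tmul a b => fv_term a ++ fv_term b
  | tinv a => fv_term a
  end.

Fixpoint fv (phi : formula) : list nat :=
  match phi with
  | feq a b => fv_term a ++ fv_term b
  | ffalse => []
  | fnot p => fv p
  | fand p q | f_or p q | fimp p q => fv p ++ fv q
  | fall x p | fex x p => remove Nat.eq_dec x (fv p)
  end.

Definition sentence (phi : formula) : Prop := fv phi = [].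

Fixpoint eval_term (G : group) (s : nat -> G) (t : term) : G :=
  match t with
  | tvar n => s n
  | tone => gone
  | tmul a b => gmul (eval_term G s a) (eval_term G s b)
  | tinv a => ginv (eval_term G s a)
  end.

Definition update (G : group) (s : nat -> G) (x : nat) (v : G) : nat -> G :=
  fun n => if Nat.eqb n x then v else s n.

Fixpoint sat (G : group) (s : nat -> G) (phi : formula) : Prop :=
  match phi with
  | feq a b => eval_term G s a = eval_term G s b
  | ffalse => False
  | fnot p => ~ sat G s p
  | fand p q => sat G s p /\ sat G s q
  | f_or p q => sat G s p \/ sat G s q
  | fimp p q => sat G s p -> sat G s q
  | fall x p => forall v : G, sat G (update G s x v) p
  | fex x p => exists v : G, sat G (update G s x v) p
  end.

Definition models (G : group) (phi : formula) : Prop := forall s : nat -> G, sat G s phi.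

Definition elementary_class (C : group -> Prop) : Prop :=
  exists T : formula -> Prop,
    (forall phi, T phi -> sentence phi) /\
    (forall G : group, C G <-> (forall phi, T phi -> models G phi)).

(* Main.v *)
Require Import Defs.
From Stdlib Require Import List Arith Lia ClassicalEpsilon ProofIrrelevance
  FunctionalExtensionality PropExtensionality Classical Reals Lra Bool.
Import ListNotations.


Section GroupLemmas.
Variable K : group.

Lemma gmulV_r (x : K) : gmul x (ginv x) = gone.
Proof.
  rewrite <- (gmul1 K (gmul x (ginv x))).
  rewrite <- (gmulV K (ginv x)) at 1.
  rewrite <- gmulA. rewrite (gmulA K (ginv x) x (ginv x)).
  rewrite gmulV, gmul1. apply gmulV.
Qed.

Lemma gmul1_r (x : K) : gmul x gone = x.
Proof. rewrite <- (gmulV K x), gmulA, gmulV_r. apply gmul1. Qed.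

Lemma gcancel_l (a x y : K) : gmul a x = gmul a y -> x = y.
Proof.
  intro H. rewrite <- (gmul1 K x), <- (gmul1 K y), <- (gmulV K a), <- !gmulA, H. reflexivity.
Qed.

Lemma ginv_unique (x y : K) : gmul x y = gone -> y = ginv x.
Proof.
  intro H. apply (gcancel_l x). rewrite H, gmulV_r. reflexivity.
Qed.

Lemma ginv_mul (x y : K) : ginv (gmul x y) = gmul (ginv y) (ginv x).
Proof.
  symmetry. apply ginv_unique.
  rewrite <- gmulA, (gmulA K y), gmulV_r, gmul1, gmulV_r. reflexivity.
Qed.

Lemma ginv_inv (x : K) : ginv (ginv x) = x.
Proof. symmetry. apply ginv_unique. apply gmulV. Qed.

Lemma ginv_one : ginv (@gone K) = gone.
Proof. symmetry. apply ginv_unique. apply gmul1. Qed.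

Fixpoint gpow (x : K) (n : nat) : K :=
  match n with 0 => gone | S n => gmul x (gpow x n) end.

Lemma gpow_add x m n : gpow x (m + n) = gmul (gpow x m) (gpow x n).
Proof.
  induction m; simpl. now rewrite gmul1. rewrite IHm. apply gmulA.
Qed.

Lemma gpow_mul x m n : gpow x (m * n) = gpow (gpow x m) n.
Proof.
  induction n; simpl. now rewrite Nat.mul_0_r.
  rewrite Nat.mul_succ_r, Nat.add_comm, gpow_add, IHn. reflexivity.
Qed.

Lemma gpow_conj g z n :
  gpow (gmul (gmul g z) (ginv g)) n = gmul (gmul g (gpow z n)) (ginv g).
Proof.
  induction n; simpl.
  - rewrite gmul1_r. symmetry. apply gmulV_r.
  - rewrite IHn. rewrite <- !gmulA. f_equal. f_equal.
    rewrite (gmulA K (ginv g) g), gmulV, gmul1. reflexivity.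
Qed.

Lemma sub_pow H (x : K) n : is_subgroup K H -> H x -> H (gpow x n).
Proof.
  intros [H1 [HM HI]] Hx. induction n; simpl; auto.
Qed.

Lemma sub_inv_iff H (x : K) : is_subgroup K H -> H (ginv x) -> H x.
Proof. intros HS Hx. rewrite <- ginv_inv. apply HS, Hx. Qed.

Lemma gpow_diff x i j : i <= j ->
  gmul (ginv (gpow x i)) (gpow x j) = gpow x (j - i).
Proof.
  intro Hij. replace j with (i + (j - i)) at 1 by lia.
  rewrite gpow_add, gmulA, gmulV, gmul1. reflexivity.
Qed.

End GroupLemmas.

Arguments gpow {K}.

Lemma not_nodup_map {A B} (f : A -> B) (s : list A) :
  NoDup s -> ~ NoDup (map f s) ->
  exists i j, In i s /\ In j s /\ i <> j /\ f i = f j.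
Proof.
  induction s as [|a s IH]; intros Hs Hm.
  - exfalso; apply Hm; constructor.
  - inversion Hs; subst. simpl in Hm.
    destruct (classic (In (f a) (map f s))) as [Hin|Hin].
    + apply in_map_iff in Hin. destruct Hin as [j [Hj1 Hj2]].
      exists a, j. repeat split; simpl; auto. intro E; subst; contradiction.
    + destruct (classic (NoDup (map f s))) as [Hn|Hn].
      * exfalso. apply Hm. constructor; auto.
      * destruct (IH H2 Hn) as [i [j [? [? [? ?]]]]]. exists i, j. simpl; auto.
Qed.

Lemma divide_fact q n : 1 <= q <= n -> Nat.divide q (fact n).
Proof.
  induction n; intros Hq. lia.
  destruct (Nat.eq_dec q (S n)) as [E|E].
  - subst. simpl fact. exists (fact n). lia.
  - simpl fact. apply Nat.divide_add_r.
    + apply IHn; lia.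
    + apply Nat.divide_mul_r, IHn; lia.
Qed.

Lemma divisible_in_fi (K : group) (H : K -> Prop) (l : list K) (x : K) :
  is_subgroup K H -> (forall y : K, exists g, In g l /\ H (gmul (ginv g) y)) ->
  (forall n, exists z, gpow z (S n) = x) -> H x.
Proof.
  intros HS Hl Hdiv.
  set (L := length l).
  destruct (Hdiv (pred (fact (S L)))) as [z Hz].
  rewrite Nat.succ_pred in Hz by (apply Nat.neq_0_lt_0, lt_O_fact).
  assert (Hc : forall i, {g | In g l /\ H (gmul (ginv g) (gpow z i))}).
  { intro i. apply constructive_indefinite_description. apply Hl. }
  set (f := fun i => proj1_sig (Hc i)).
  assert (Hnd : ~ NoDup (map f (seq 0 (S L)))).
  { intro Hn. apply NoDup_incl_length with (l' := l) in Hn.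
    - rewrite length_map, length_seq in Hn. unfold L in Hn. lia.
    - intros g Hg. apply in_map_iff in Hg. destruct Hg as [i [<- _]].
      unfold f. destruct (Hc i) as [g [? ?]]; simpl; auto. }
  destruct (not_nodup_map f _ (seq_NoDup _ _) Hnd) as [i [j [Hi [Hj [Hij Hf]]]]].
  apply in_seq in Hi, Hj.
  assert (Key : forall i0 j0, i0 < j0 -> j0 <= L -> f i0 = f j0 -> H x).
  { intros i0 j0 Hij0 HjL Hf0.
    assert (Hq : H (gpow z (j0 - i0))).
    { rewrite <- gpow_diff by lia.
      pose proof (proj2 (proj2_sig (Hc i0))) as Hgi.
      pose proof (proj2 (proj2_sig (Hc j0))) as Hgj.
      change (H (gmul (ginv (f i0)) (gpow z i0))) in Hgi.
      change (H (gmul (ginv (f j0)) (gpow z j0))) in Hgj.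
      rewrite Hf0 in Hgi. set (g := f j0) in *.
      replace (gmul (ginv (gpow z i0)) (gpow z j0)) with
        (gmul (ginv (gmul (ginv g) (gpow z i0))) (gmul (ginv g) (gpow z j0))).
      - apply HS; auto. apply HS; auto.
      - rewrite ginv_mul, ginv_inv, <- gmulA, (gmulA K g), gmulV_r, gmul1. reflexivity. }
    destruct (divide_fact (j0 - i0) (S L) ltac:(lia)) as [c Hcq].
    rewrite <- Hz, Hcq, Nat.mul_comm, gpow_mul. apply sub_pow; auto. }
  destruct (Nat.lt_trichotomy i j) as [Hlt|[Hlt|Hlt]].
  - apply (Key i j); [lia|lia|auto].
  - contradiction.
  - apply (Key j i); [lia|lia|auto].
Qed.

Lemma gcancel1 (K : group) (x w : K) : gmul x (gmul (ginv x) w) = w.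
Proof. rewrite gmulA, gmulV_r. apply gmul1. Qed.
Lemma gcancel2 (K : group) (x w : K) : gmul (ginv x) (gmul x w) = w.
Proof. rewrite gmulA, gmulV. apply gmul1. Qed.

Ltac gsimpl := repeat progress (rewrite <- ?gmulA;
   rewrite ?gcancel1, ?gcancel2, ?gmulV, ?gmulV_r, ?gmul1, ?gmul1_r, ?ginv_inv, ?ginv_mul, ?ginv_one).


Section Zorn.
Variable A : Type.
Definition incl_s (X Y : A -> Prop) := forall a, X a -> Y a.
Definition chain (C : (A -> Prop) -> Prop) :=
  forall X Y, C X -> C Y -> incl_s X Y \/ incl_s Y X.
Definition unionC (C : (A -> Prop) -> Prop) : A -> Prop :=
  fun a => exists X, C X /\ X a.

Lemma set_ext (X Y : A -> Prop) : incl_s X Y -> incl_s Y X -> X = Y.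
Proof.
  intros H1 H2. apply functional_extensionality; intro a.
  apply propositional_extensionality; split; auto.
Qed.

Theorem zorn (P : (A -> Prop) -> Prop) (X0 : A -> Prop) :
  P X0 ->
  (forall C, (forall X, C X -> P X) -> (exists X, C X) -> chain C -> P (unionC C)) ->
  exists M, P M /\ forall Y, P Y -> incl_s M Y -> incl_s Y M.
Proof.
  intros HX0 Hch. apply NNPP; intro Hno.
  assert (Hg : forall X, exists Y, P X -> P Y /\ incl_s X Y /\ ~ incl_s Y X).
  { intro X. destruct (classic (P X)) as [HP|HP].
    - apply NNPP; intro N. apply Hno. exists X; split; auto.
      intros Y HY HXY. apply NNPP; intro HYX. apply N. exists Y. auto.
    - exists X; intro; contradiction. }
  set (g := fun X => proj1_sig (constructive_indefinite_description _ (Hg X))).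
  assert (gspec : forall X, P X -> P (g X) /\ incl_s X (g X) /\ ~ incl_s (g X) X).
  { intros X HX. unfold g. destruct (constructive_indefinite_description _ (Hg X)); simpl; auto. }
  clearbody g.
  set (tower := fun F : (A -> Prop) -> Prop => F X0 /\ (forall X, F X -> F (g X)) /\
     (forall C, (forall X, C X -> F X) -> (exists X, C X) -> chain C -> F (unionC C))).
  set (T := fun X => forall F, tower F -> F X).
  assert (Tt : tower T).
  { split; [|split].
    - intros F HF; apply HF.
    - intros X HX F HF. apply HF, HX, HF.
    - intros C HC Hne Hc F HF. apply HF; auto. intros X HX. apply HC; auto. }
  assert (TP : forall X, T X -> P X /\ incl_s X0 X).
  { intros X HX. apply HX. split; [|split].
    - split; auto. intros a Ha; auto.
    - intros Y [HY HY0]. split. apply gspec; auto.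
      intros a Ha. apply gspec; auto.
    - intros C HC Hne Hc. split.
      + apply Hch; auto. intros Z HZ; apply HC; auto.
      + destruct Hne as [Z HZ]. intros a Ha. exists Z. split; auto. apply HC; auto. }
  set (extreme := fun C => forall X, T X -> incl_s X C -> ~ incl_s C X -> incl_s (g X) C).
  assert (L1 : forall C, T C -> extreme C -> forall X, T X -> incl_s X C \/ incl_s (g C) X).
  { intros C TC EC.
    enough (H : tower (fun X => T X /\ (incl_s X C \/ incl_s (g C) X))).
    { intros X HX. apply (HX _ H). }
    split; [|split].
    - split. apply Tt. left. apply TP; auto.
    - intros X [TX [HXC|HgX]]; split; [apply Tt; auto| |apply Tt; auto|].
      + destruct (classic (incl_s C X)) as [HCX|HCX].
        * right. rewrite (set_ext X C); auto. intros a Ha; auto.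
        * left. apply EC; auto.
      + right. intros a Ha. apply (proj1 (proj2 (gspec X (proj1 (TP X TX))))). auto.
    - intros Cs HCs Hne Hc. split.
      + apply Tt; auto. intros X HX; apply HCs; auto.
      + destruct (classic (exists Y, Cs Y /\ incl_s (g C) Y)) as [[Y [HY HgY]]|HN].
        * right. intros a Ha. exists Y; auto.
        * left. intros a [Y [HY Ha]]. destruct (HCs Y HY) as [_ [HYC|HgY]]; auto.
          exfalso; apply HN; exists Y; auto. }
  assert (L2 : forall C, T C -> extreme C).
  { enough (H : tower (fun C => T C /\ extreme C)).
    { intros C HC. apply (HC _ H). }
    split; [|split].
    - split. apply Tt. intros X TX HXa HXb. exfalso. apply HXb. apply TP; auto.
    - intros C [TC EC]. split. apply Tt; auto.
      intros X TX HXg HgX. destruct (L1 C TC EC X TX) as [HXC|HgCX]; [|contradiction].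
      destruct (classic (incl_s C X)) as [HCX|HCX].
      + rewrite (set_ext X C); auto. intros a Ha; auto.
      + intros a Ha. apply (proj1 (proj2 (gspec C (proj1 (TP C TC))))). exact (EC X TX HXC HCX a Ha).
    - intros Cs HCs Hne Hc. split.
      + apply Tt; auto. intros X HX; apply HCs; auto.
      + intros X TX HXU HUX.
        destruct (classic (exists C, Cs C /\ ~ incl_s (g C) X)) as [[C [HC HgC]]|HN].
        * destruct (HCs C HC) as [TC EC].
          destruct (L1 C TC EC X TX) as [HXC|]; [|contradiction].
          destruct (classic (incl_s C X)) as [HCX|HCX].
          -- assert (EX : X = C) by (apply set_ext; auto). subst X.
             apply not_all_ex_not in HUX. destruct HUX as [a Ha].
             apply imply_to_and in Ha. destruct Ha as [[C' [HC' Ha]] Hna].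
             destruct (HCs C' HC') as [TC' _].
             destruct (L1 C TC EC C' TC') as [HC'C|HgC'].
             ++ exfalso; apply Hna; auto.
             ++ intros b Hb. exists C'; auto.
          -- intros b Hb. exists C. split; auto. exact (EC X TX HXC HCX b Hb).
        * exfalso. apply HUX. intros a [C [HC Ha]].
          apply NNPP; intro Hna. apply HN. exists C. split; auto.
          intro HgC. apply Hna. apply HgC.
          apply (proj1 (proj2 (gspec C (proj1 (TP C (proj1 (HCs C HC))))))). auto. }
  assert (Tc : chain T).
  { intros X Y TX TY. destruct (L1 Y TY (L2 Y TY) X TX) as [H|H]; auto.
    right. intros a Ha. apply H.
    apply (proj1 (proj2 (gspec Y (proj1 (TP Y TY))))). auto. }
  assert (TU : T (unionC T)).
  { apply (proj2 (proj2 Tt)); [intros X HX; exact HX| exists X0; apply Tt | exact Tc]. }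
  assert (TgU : T (g (unionC T))) by exact (proj1 (proj2 Tt) _ TU).
  apply (proj2 (proj2 (gspec _ (proj1 (TP _ TU))))).
  intros a Ha. exists (g (unionC T)). split; auto.
Qed.
End Zorn.
Arguments incl_s {A}.
Arguments chain {A}.
Arguments unionC {A}.


Definition bad (K : group) : Prop :=
  exists H : K -> Prop, is_subgroup K H /\ finite_index K H /\ proper K H.

Lemma bad_not_NFQ K : bad K -> ~ NFQ K.
Proof.
  intros [H [HS [HF HP]]] [_ HN]. exact (HN H HS HF HP).
Qed.

Section Generic.
Variable K : group.

Lemma conj_eq (x y : K) :
  gmul (gmul (ginv x) y) x =
  gmul y (gmul (gmul (gmul (ginv y) (ginv x)) (ginv (ginv y))) (ginv (ginv x))).
Proof.
  rewrite !ginv_inv. rewrite !gmulA. rewrite gmulV_r, gmul1. reflexivity.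
Qed.

Lemma bad_of_quot (N : K -> Prop) (t : K) :
  is_subgroup K N -> (forall x, N (gmul x x)) ->
  (forall x y, N (gmul (gmul (gmul x y) (ginv x)) (ginv y))) -> ~ N t -> bad K.
Proof.
  intros HN Hsq Hcomm Ht.
  destruct (zorn K (fun M => is_subgroup K M /\ incl_s N M /\ ~ M t) N)
    as [M [[HMs [HNM HMt]] Hmax]].
  - split; [exact HN | split; [intros a Ha; exact Ha | exact Ht]].
  - intros C HC [X1 HX1] Hc. split; [split; [|split]|split].
    + exists X1. split; auto. apply (proj1 (proj1 (HC X1 HX1))).
    + intros a b [X [HX Ha]] [Y [HY Hb]].
      destruct (HC X HX) as [[_ [HXm _]] _]. destruct (HC Y HY) as [[_ [HYm _]] _].
      destruct (Hc X Y HX HY) as [HXY|HYX].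
      * exists Y. split; auto.
      * exists X. split; auto.
    + intros a [X [HX Ha]]. exists X. split; auto. apply (proj2 (proj2 (proj1 (HC X HX)))); auto.
    + intros a Ha. exists X1. split; auto. apply (proj1 (proj2 (HC X1 HX1))); auto.
    + intros [X [HX HXt]]. apply (proj2 (proj2 (HC X HX))); auto.
  - destruct HMs as [HM1 [HMm HMi]].
    assert (Mnorm : forall x y, M y -> M (gmul (gmul (ginv x) y) x)).
    { intros x y Hy. rewrite conj_eq. apply HMm; [exact Hy | apply HNM, Hcomm]. }
    assert (Key : forall x, M x \/ M (gmul (ginv t) x)).
    { intro x. destruct (classic (M x)) as [Hx|Hx]; [left; auto|right].
      set (M' := fun y => M y \/ M (gmul (ginv x) y)).
      assert (HM't : M' t).
      { apply NNPP; intro Hn.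
        assert (HP : is_subgroup K M' /\ incl_s N M' /\ ~ M' t).
        { split; [split; [|split]|split].
          - left; auto.
          - intros y z [Hy|Hy] [Hz|Hz].
            + left; auto.
            + right. replace (gmul (ginv x) (gmul y z)) with
                (gmul (gmul (gmul (ginv x) y) x) (gmul (ginv x) z)) by (gsimpl; reflexivity).
              apply HMm; [apply Mnorm; exact Hy | exact Hz].
            + right. rewrite gmulA. apply HMm; auto.
            + left. replace (gmul y z) with
                (gmul (gmul (gmul x x) (gmul (gmul (ginv x) (gmul (ginv x) y)) x))
                      (gmul (ginv x) z)) by (gsimpl; reflexivity).
              apply HMm; [apply HMm; [apply HNM, Hsq | apply Mnorm; exact Hy] | exact Hz].
          - intros y [Hy|Hy].
            + left; auto.
            + right. replace (gmul (ginv x) (ginv y)) with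
                (gmul (gmul (gmul (ginv x) (ginv (gmul (ginv x) y))) x)
                      (gmul (ginv x) (ginv x))) by (gsimpl; reflexivity).
              apply HMm; [apply Mnorm; apply HMi; exact Hy | apply HNM, Hsq].
          - intros a Ha. left; auto.
          - exact Hn. }
        assert (Hinc : incl_s M M') by (intros a Ha; left; auto).
        apply Hx. apply (Hmax M' HP Hinc). right. rewrite gmulV. auto. }
      destruct HM't as [Ht'|Ht']; [contradiction|].
      apply HMi in Ht'. rewrite ginv_mul, ginv_inv in Ht'. exact Ht'. }
    exists M. split; [split; auto|split].
    + exists [gone; t]. intro x. destruct (Key x) as [Hx|Hx].
      * exists gone. split; [simpl; auto|]. rewrite ginv_one, gmul1. auto.
      * exists t. split; simpl; auto.
    + exists t. auto.
Qed.
End Generic.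

(** * Ultrafilters *)
Record UF := {
  uf : (nat -> Prop) -> Prop;
  uf_full : uf (fun _ => True);
  uf_empty : ~ uf (fun _ => False);
  uf_and : forall A B, uf A -> uf B -> uf (fun n => A n /\ B n);
  uf_mono : forall A B : nat -> Prop, uf A -> (forall n, A n -> B n) -> uf B;
  uf_ultra : forall A, uf A \/ uf (fun n => ~ A n);
  uf_cof : forall m, uf (fun n => m <= n)
}.

Definition isfilter (F : (nat -> Prop) -> Prop) :=
  F (fun _ => True) /\ ~ F (fun _ => False) /\
  (forall A B, F A -> F B -> F (fun n => A n /\ B n)) /\
  (forall A B : nat -> Prop, F A -> (forall n, A n -> B n) -> F B) /\
  (forall m, F (fun n => m <= n)).

Lemma UF_exists : exists U : UF, True.
Proof.
  destruct (zorn (nat -> Prop) isfilter (fun A => exists m, forall n, m <= n -> A n))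
    as [M [HM Hmax]].
  - split; [|split; [|split; [|split]]].
    + exists 0; auto.
    + intros [m Hm]. exact (Hm m (le_n m)).
    + intros A B [m Hm] [m' Hm']. exists (m + m'). intros n Hn. split; [apply Hm|apply Hm']; lia.
    + intros A B [m Hm] HAB. exists m. auto.
    + intros m. exists m. auto.
  - intros C HC [X1 HX1] Hc. split; [|split; [|split; [|split]]].
    + exists X1. split; auto. apply HC; auto.
    + intros [X [HX HXe]]. apply (HC X HX). auto.
    + intros A B [X [HX HA]] [Y [HY HB]].
      destruct (Hc X Y HX HY) as [HXY|HYX].
      * exists Y. split; auto. apply (HC Y HY); auto.
      * exists X. split; auto. apply (HC X HX); auto.
    + intros A B [X [HX HA]] HAB. exists X. split; auto. apply (HC X HX) with A; auto.
    + intros m. exists X1. split; auto. apply (HC X1 HX1).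
  - destruct HM as [Mf [Me [Ma [Mm Mc]]]].
    assert (Hu : forall A, M A \/ M (fun n => ~ A n)).
    { intro A. destruct (classic (M (fun n => ~ A n))) as [H|H]; [right; auto|left].
      set (M' := fun B : nat -> Prop => exists C, M C /\ forall n, C n -> A n -> B n).
      assert (HF : isfilter M').
      { split; [|split; [|split; [|split]]].
        - exists (fun _ => True). split; auto.
        - intros [C [HC HCA]]. apply H. apply (Mm C); [exact HC|].
          intros n Hn HA. exact (HCA n Hn HA).
        - intros A1 B1 [C [HC H1]] [C' [HC' H2]]. exists (fun n => C n /\ C' n).
          split; auto. intros n [Hn Hn'] HA. split; auto.
        - intros A1 B1 [C [HC H1]] HAB. exists C. split; auto.
        - intros m. exists (fun n => m <= n). split; auto. }
      assert (Hinc : incl_s M M').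
      { intros B HB. exists B. split; auto. }
      apply (Hmax M' HF Hinc). exists (fun _ => True). split; auto. }
    exists (Build_UF M Mf Me Ma Mm Hu Mc). exact I.
Qed.

Section Ultra.
Variable G : group.
Variable U : UF.

Lemma uf_ex A : uf U A -> exists n, A n.
Proof.
  intro H. apply NNPP; intro Hn. apply (uf_empty U).
  apply (uf_mono U A); auto. intros n Hn'. apply Hn. exists n; auto.
Qed.

Lemma uf_and3 A B C : uf U A -> uf U B -> uf U C -> uf U (fun n => A n /\ B n /\ C n).
Proof.
  intros. apply (uf_and U); auto. apply (uf_and U); auto.
Qed.

Lemma uf_not A : uf U (fun n => ~ A n) <-> ~ uf U A.
Proof.
  split.
  - intros H1 H2. apply (uf_empty U). apply (uf_mono U _ _ (uf_and U _ _ H1 H2)).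
    intros n [a b]; auto.
  - intro H. destruct (uf_ultra U A); auto. contradiction.
Qed.

Definition cls (f : nat -> G) : (nat -> G) -> Prop :=
  fun g => uf U (fun n => f n = g n).
Definition UPc := { c : (nat -> G) -> Prop | exists f, c = cls f }.
Definition mk (f : nat -> G) : UPc := exist _ (cls f) (ex_intro _ f eq_refl).
Definition rep (c : UPc) : nat -> G :=
  proj1_sig (constructive_indefinite_description _ (proj2_sig c)).
Lemma rep_spec c : proj1_sig c = cls (rep c).
Proof.
  unfold rep. destruct (constructive_indefinite_description _ (proj2_sig c)); simpl; auto.
Qed.

Lemma UPc_eq (a b : UPc) : proj1_sig a = proj1_sig b -> a = b.
Proof.
  destruct a as [a Ha], b as [b Hb]; simpl. intro E. subst b.
  f_equal. apply proof_irrelevance.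
Qed.

Lemma cls_eq f g : cls f = cls g -> uf U (fun n => f n = g n).
Proof.
  intro E. change (cls f g). rewrite E. unfold cls. apply (uf_mono U _ _ (uf_full U)). auto.
Qed.

Lemma mk_eq f g : uf U (fun n => f n = g n) -> mk f = mk g.
Proof.
  intro H. apply UPc_eq. simpl. apply functional_extensionality; intro h.
  apply propositional_extensionality. unfold cls. split; intro H'.
  - apply (uf_mono U _ _ (uf_and U _ _ H H')). intros n [e1 e2]. congruence.
  - apply (uf_mono U _ _ (uf_and U _ _ H H')). intros n [e1 e2]. congruence.
Qed.

Lemma mk_rep c : mk (rep c) = c.
Proof. apply UPc_eq. simpl. symmetry. apply rep_spec. Qed.

Lemma rep_mk f : uf U (fun n => rep (mk f) n = f n).
Proof.
  apply cls_eq. rewrite <- rep_spec. reflexivity.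
Qed.

Definition UPmul (a b : UPc) : UPc := mk (fun n => gmul (rep a n) (rep b n)).
Definition UPinv (a : UPc) : UPc := mk (fun n => ginv (rep a n)).
Definition UPone : UPc := mk (fun _ => gone).

Lemma UPmulA x y z : UPmul x (UPmul y z) = UPmul (UPmul x y) z.
Proof.
  unfold UPmul. apply mk_eq.
  apply (uf_mono U _ _ (uf_and U _ _ (rep_mk (fun n => gmul (rep y n) (rep z n)))
                                     (rep_mk (fun n => gmul (rep x n) (rep y n))))).
  intros n [e1 e2]. rewrite e1, e2. apply gmulA.
Qed.

Lemma UPmul1 x : UPmul UPone x = x.
Proof.
  unfold UPmul, UPone. transitivity (mk (rep x)); [|apply mk_rep]. apply mk_eq.
  apply (uf_mono U _ _ (rep_mk (fun _ => gone))).
  intros n e. rewrite e. apply gmul1.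
Qed.

Lemma UPmulV x : UPmul (UPinv x) x = UPone.
Proof.
  unfold UPmul, UPinv, UPone. apply mk_eq.
  apply (uf_mono U _ _ (rep_mk (fun n => ginv (rep x n)))).
  intros n e. rewrite e. apply gmulV.
Qed.

Definition UPgroup : group := Group UPc UPmul UPinv UPone UPmulA UPmul1 UPmulV.

Definition sn (s : nat -> UPgroup) (n : nat) : nat -> G := fun x => rep (s x) n.

Lemma los_term (s : nat -> UPgroup) t :
  uf U (fun n => rep (eval_term UPgroup s t) n = eval_term G (sn s n) t).
Proof.
  induction t; cbn [eval_term].
  - apply (uf_mono U _ _ (uf_full U)). intros; reflexivity.
  - apply (rep_mk (fun _ => gone)).
  - apply (uf_mono U _ _ (uf_and3 _ _ _ (rep_mk (fun n => gmul (rep (eval_term UPgroup s t1) n)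
                                                       (rep (eval_term UPgroup s t2) n)))
                                       IHt1 IHt2)).
    intros n [e1 [e2 e3]]. etransitivity; [exact e1|]. rewrite e2, e3. reflexivity.
  - apply (uf_mono U _ _ (uf_and _ _ _ (rep_mk (fun n => ginv (rep (eval_term UPgroup s t) n)))
                                       IHt)).
    intros n [e1 e2]. etransitivity; [exact e1|]. rewrite e2. reflexivity.
Qed.

Lemma sn_update s x v n :
  sn (update UPgroup s x v) n = update G (sn s n) x (rep v n).
Proof.
  apply functional_extensionality; intro y. unfold sn, update.
  destruct (Nat.eqb y x); reflexivity.
Qed.

Definition choose_w (P : G -> Prop) : G :=
  match excluded_middle_informative (exists w, P w) with
  | left H => proj1_sig (constructive_indefinite_description _ H)
  | right _ => gone
  end.
Lemma choose_w_spec P : (exists w, P w) -> P (choose_w P).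
Proof.
  intro H. unfold choose_w. destruct (excluded_middle_informative (exists w, P w)).
  - destruct (constructive_indefinite_description _ e); simpl; auto.
  - contradiction.
Qed.

Lemma los (phi : formula) : forall s : nat -> UPgroup,
  sat UPgroup s phi <-> uf U (fun n => sat G (sn s n) phi).
Proof.
  induction phi; intro s; simpl.
  - pose proof (los_term s t) as H1. pose proof (los_term s t0) as H2. split.
    + intro E. rewrite E in H1.
      apply (uf_mono U _ _ (uf_and U _ _ H1 H2)). intros n [e1 e2]. congruence.
    + intro H. rewrite <- (mk_rep (eval_term UPgroup s t)), <- (mk_rep (eval_term UPgroup s t0)).
      apply mk_eq. apply (uf_mono U _ _ (uf_and3 _ _ _ H1 H2 H)).
      intros n [e1 [e2 e3]]. congruence.
  - split; [contradiction|]. apply uf_empty.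
  - rewrite IHphi. symmetry. apply uf_not.
  - rewrite IHphi1, IHphi2. split.
    + intros [H1 H2]. apply (uf_and U); auto.
    + intro H. split; apply (uf_mono U _ _ H); intros n [a b]; auto.
  - rewrite IHphi1, IHphi2. split.
    + intros [H|H]; apply (uf_mono U _ _ H); auto.
    + intro H. apply NNPP; intro Hn. apply not_or_and in Hn. destruct Hn as [Ha Hb].
      apply uf_not in Ha, Hb. apply (uf_empty U).
      apply (uf_mono U _ _ (uf_and3 _ _ _ H Ha Hb)). intros n [[a|a] [b c]]; auto.
  - rewrite IHphi1, IHphi2. split.
    + intro H. destruct (uf_ultra U (fun n => sat G (sn s n) phi1)) as [Ha|Ha].
      * apply (uf_mono U _ _ (H Ha)). auto.
      * apply (uf_mono U _ _ Ha). intros n a b; contradiction.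
    + intros H Ha. apply (uf_mono U _ _ (uf_and U _ _ H Ha)). intros n [a b]; auto.
  - split.
    + intro H. apply NNPP; intro Hn. apply uf_not in Hn.
      set (wf := fun k => choose_w (fun w => ~ sat G (update G (sn s k) n w) phi)).
      pose proof (proj1 (IHphi _) (H (mk wf))) as H1.
      pose proof (rep_mk wf) as H2.
      destruct (uf_ex _ (uf_and3 _ _ _ H1 H2 Hn)) as [k [a [b c]]].
      rewrite sn_update, b in a.
      apply not_all_ex_not in c. apply (choose_w_spec _ c). exact a.
    + intros H v. apply IHphi. apply (uf_mono U _ _ H). intros k Hk.
      rewrite sn_update. apply Hk.
  - split.
    + intros [v Hv]. apply IHphi in Hv. apply (uf_mono U _ _ Hv). intros k Hk.
      rewrite sn_update in Hk. eexists; exact Hk.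
    + intro H. set (wf := fun k => choose_w (fun w => sat G (update G (sn s k) n w) phi)).
      exists (mk wf). apply IHphi.
      apply (uf_mono U _ _ (uf_and U _ _ H (rep_mk wf))). intros k [a b].
      rewrite sn_update, b. apply choose_w_spec; auto.
Qed.

Lemma models_UP phi : models G phi -> models UPgroup phi.
Proof.
  intros H s. apply los. apply (uf_mono U _ _ (uf_full U)). intros; apply H.
Qed.

Lemma bad_pow : bad UPgroup -> bad (pow_omega G).
Proof.
  intros [H' [[H1 [Hm Hi]] [[l Hl] [y Hy]]]].
  assert (Emul : forall f g : nat -> G,
     mk (pw_mul G f g) = UPmul (mk f) (mk g)).
  { intros f g. unfold UPmul. apply mk_eq.
    apply (uf_mono U _ _ (uf_and U _ _ (rep_mk f) (rep_mk g))).
    intros n [e1 e2]. unfold pw_mul. rewrite e1, e2. reflexivity. }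
  assert (Einv : forall f : nat -> G, mk (pw_inv G f) = UPinv (mk f)).
  { intros f. unfold UPinv. apply mk_eq.
    apply (uf_mono U _ _ (rep_mk f)). intros n e. unfold pw_inv. rewrite e. reflexivity. }
  exists (fun f => H' (mk f)). split; [split; [|split]|split].
  - exact H1.
  - intros f g Hf Hg. simpl. rewrite Emul. apply Hm; auto.
  - intros f Hf. simpl. rewrite Einv. apply Hi; auto.
  - exists (map rep l). intro f. destruct (Hl (mk f)) as [g [Hg HH]].
    exists (rep g). split. apply in_map; auto.
    simpl. rewrite Emul, Einv, mk_rep. exact HH.
  - exists (rep y). simpl. rewrite mk_rep. exact Hy.
Qed.
End Ultra.


Open Scope R_scope.

Definition Dv := nat -> R.
Definition vadd (x y : Dv) : Dv := fun i => x i + y i.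
Definition vneg (x : Dv) : Dv := fun i => - x i.
Definition vsub (x y : Dv) : Dv := fun i => x i - y i.
Definition vzero : Dv := fun _ => 0.
Definition vscale (c : R) (x : Dv) : Dv := fun i => c * x i.
Definition ev (a : nat) : Dv := fun i => if Nat.eqb i a then 1 else 0.

Definition lc (cs : list (R * Dv)) : Dv :=
  fold_right (fun p acc => vadd (vscale (fst p) (snd p)) acc) vzero cs.

Definition in_span (u : list Dv) (v : Dv) : Prop :=
  exists cs, (forall p, In p cs -> In (snd p) u) /\ v = lc cs.

Lemma vext (x y : Dv) : (forall i, x i = y i) -> x = y.
Proof. intro H; apply functional_extensionality; auto. Qed.

Lemma lc_app cs cs' : lc (cs ++ cs') = vadd (lc cs) (lc cs').
Proof.
  induction cs; simpl; apply vext; intro i; unfold vadd, vscale, vzero.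
  - lra.
  - rewrite IHcs. unfold vadd. lra.
Qed.

Lemma lc_scale c cs : lc (map (fun p => (c * fst p, snd p)) cs) = vscale c (lc cs).
Proof.
  induction cs; simpl; apply vext; intro i; unfold vadd, vscale, vzero.
  - lra.
  - rewrite IHcs. unfold vscale. simpl. lra.
Qed.

Lemma span_zero u : in_span u vzero.
Proof. exists []. split; simpl; auto. contradiction. Qed.

Lemma span_mem u v : In v u -> in_span u v.
Proof.
  intro H. exists [(1, v)]. split.
  - intros p [<-|[]]; auto.
  - apply vext; intro i. simpl. unfold vadd, vscale, vzero. lra.
Qed.

Lemma span_add u v w : in_span u v -> in_span u w -> in_span u (vadd v w).
Proof.
  intros [cs [H1 ->]] [cs' [H2 ->]]. exists (cs ++ cs'). split.
  - intros p Hp. apply in_app_or in Hp. destruct Hp; auto.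
  - rewrite lc_app; auto.
Qed.

Lemma span_scale u c v : in_span u v -> in_span u (vscale c v).
Proof.
  intros [cs [H1 ->]]. exists (map (fun p => (c * fst p, snd p)) cs). split.
  - intros p Hp. apply in_map_iff in Hp. destruct Hp as [q [<- Hq]]. simpl. auto.
  - rewrite lc_scale; auto.
Qed.

Lemma span_lc u cs : (forall p, In p cs -> in_span u (snd p)) -> in_span u (lc cs).
Proof.
  induction cs; intro H; simpl.
  - apply span_zero.
  - apply span_add. apply span_scale, H; simpl; auto. apply IHcs. intros; apply H; simpl; auto.
Qed.

Lemma span_trans u w v : (forall y, In y u -> in_span w y) -> in_span u v -> in_span w v.
Proof.
  intros H [cs [Hcs ->]]. apply span_lc. intros p Hp. apply H, Hcs, Hp.
Qed.

Lemma span_sub u v w : in_span u v -> in_span u w -> in_span u (vsub v w).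
Proof.
  intros Hv Hw. replace (vsub v w) with (vadd v (vscale (-1) w)).
  - apply span_add; auto. apply span_scale; auto.
  - apply vext; intro i; unfold vadd, vscale, vsub; lra.
Qed.

Lemma span_incl u w v : incl u w -> in_span u v -> in_span w v.
Proof.
  intros H. apply span_trans. intros y Hy. apply span_mem, H, Hy.
Qed.

Lemma lc_coord cs r : (forall p, In p cs -> snd p r = 0) -> lc cs r = 0.
Proof.
  induction cs; intro H; simpl.
  - reflexivity.
  - unfold vadd at 1, vscale at 1.
    assert (E1 : lc cs r = 0) by (apply IHcs; intros; apply H; simpl; auto).
    assert (E2 : snd a r = 0) by (apply H; simpl; auto).
    destruct a as [c v]. simpl in *. rewrite E1, E2. lra.
Qed.

Lemma steinitz : forall r (u : list Dv), (forall a, (a < r)%nat -> in_span u (ev a)) ->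
  (r <= length u)%nat.
Proof.
  induction r as [|r IH]; intros u H.
  - lia.
  - assert (Hr : exists w, In w u /\ w r <> 0).
    { apply NNPP; intro Hn. destruct (H r ltac:(lia)) as [cs [Hcs Hev]].
      assert (E : ev r r = lc cs r) by (rewrite Hev; reflexivity).
      rewrite lc_coord in E.
      - unfold ev in E. rewrite Nat.eqb_refl in E. lra.
      - intros p Hp. apply NNPP; intro Hp'. apply Hn. exists (snd p). split; auto. }
    destruct Hr as [w [Hw Hwr]].
    destruct (in_split _ _ Hw) as [u1 [u2 Eu]].
    set (P := fun y : Dv => fun i => y i - (y r / w r) * w i).
    assert (Plin : forall cs, P (lc cs) = lc (map (fun p => (fst p, P (snd p))) cs)).
    { induction cs as [|p cs IHc]; simpl.
      - apply vext; intro i. unfold P, vzero. field. auto.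
      - rewrite <- IHc. apply vext; intro i. unfold P, vadd, vscale. field. auto. }
    assert (Hlen : (r <= length (map P (u1 ++ u2)))%nat).
    { apply IH. intros a Ha. destruct (H a ltac:(lia)) as [cs [Hcs Hev]].
      assert (E : ev a = P (ev a)).
      { apply vext; intro i. unfold P, ev.
        replace (Nat.eqb r a) with false by (symmetry; apply Nat.eqb_neq; lia).
        field. auto. }
      rewrite E, Hev, Plin. apply span_lc. intros p Hp. apply in_map_iff in Hp.
      destruct Hp as [q [<- Hq]]. simpl.
      specialize (Hcs q Hq). rewrite Eu in Hcs. apply in_app_or in Hcs.
      destruct Hcs as [Hq1|[Hq1|Hq1]].
      - apply span_mem, in_map, in_or_app; auto.
      - rewrite <- Hq1. replace (P w) with vzero. apply span_zero.
        apply vext; intro i. unfold P, vzero. field. auto.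
      - apply span_mem, in_map, in_or_app; auto. }
    rewrite length_map, length_app in Hlen. rewrite Eu, length_app. simpl. lia.
Qed.

Lemma ev_eq a b : ev a = ev b -> a = b.
Proof.
  intro E. assert (E' : ev a a = ev b a) by (rewrite E; reflexivity).
  unfold ev in E'. rewrite Nat.eqb_refl in E'.
  destruct (Nat.eqb a b) eqn:Eab. apply Nat.eqb_eq; auto. lra.
Qed.

Lemma LB k (d : list Dv) : (length d < k)%nat ->
  exists a, (a < 2 * k)%nat /\ forall b, (b < 2 * k)%nat -> b <> a ->
     ~ in_span d (vsub (ev a) (ev b)).
Proof.
  intro Hk. apply NNPP; intro Hn.
  assert (Hpart : forall a, exists b, (a < 2 * k)%nat ->
      (b < 2 * k)%nat /\ b <> a /\ in_span d (vsub (ev a) (ev b))).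
  { intro a. apply NNPP; intro H1. apply Hn. exists a. split.
    - apply NNPP; intro Ha. apply H1. exists a. intro; contradiction.
    - intros b Hb Hba Hs. apply H1. exists b. intros _. auto. }
  set (sg := fun a => proj1_sig (constructive_indefinite_description _ (Hpart a))).
  assert (Hsg : forall a, (a < 2 * k)%nat ->
      (sg a < 2 * k)%nat /\ sg a <> a /\ in_span d (vsub (ev a) (ev (sg a)))).
  { intros a Ha. unfold sg. destruct (constructive_indefinite_description _ (Hpart a)); simpl; auto. }
  clearbody sg.
  set (isrep := fun a => ~ in_span (d ++ map ev (seq 0 a)) (ev a)).
  set (repb := fun a => if excluded_middle_informative (isrep a) then true else false).
  set (Rep := filter repb (seq 0 (2 * k))).
  assert (HRep : forall a, In a Rep <-> (a < 2 * k)%nat /\ isrep a).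
  { intro a. unfold Rep. rewrite filter_In, in_seq. unfold repb.
    destruct (excluded_middle_informative (isrep a)); split; intros [H1 H2];
      repeat split; auto; try lia; discriminate. }
  assert (Hall : forall n a, (a < n)%nat -> (a < 2 * k)%nat -> in_span (d ++ map ev Rep) (ev a)).
  { induction n; intros a Han Hak. lia.
    destruct (classic (isrep a)) as [Hr|Hr].
    - apply span_mem. apply in_or_app. right. apply in_map. apply HRep. auto.
    - unfold isrep in Hr. apply NNPP in Hr. apply (span_trans (d ++ map ev (seq 0 a))); auto.
      intros y Hy. apply in_app_or in Hy. destruct Hy as [Hy|Hy].
      + apply span_mem, in_or_app; auto.
      + apply in_map_iff in Hy. destruct Hy as [b [<- Hb]]. apply in_seq in Hb.
        apply IHn; lia. }
  assert (H2 : (2 * k <= length d + length Rep)%nat).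
  { rewrite <- (length_map ev Rep), <- length_app. apply steinitz.
    intros a Ha. apply (Hall (S a)); lia. }
  assert (Hgt : forall a, In a Rep -> (a < sg a)%nat).
  { intros a Ha. apply HRep in Ha. destruct Ha as [Ha Hr].
    destruct (Hsg a Ha) as [_ [Hne Hs]].
    destruct (Nat.lt_trichotomy a (sg a)) as [H|[H|H]]; auto.
    - exfalso; apply Hne; auto.
    - exfalso. apply Hr. replace (ev a) with (vadd (vsub (ev a) (ev (sg a))) (ev (sg a))).
      + apply span_add.
        * apply (span_incl d); auto. intros y Hy; apply in_or_app; auto.
        * apply span_mem, in_or_app. right. apply in_map, in_seq. lia.
      + apply vext; intro i; unfold vadd, vsub; lra. }
  assert (Hnot : forall a, In a Rep -> ~ In (sg a) Rep).
  { intros a Ha Hs. pose proof (Hgt a Ha) as Hlt. apply HRep in Ha, Hs.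
    destruct Ha as [Ha _]. destruct Hs as [_ Hr]. apply Hr.
    destruct (Hsg a Ha) as [_ [_ Hsp]].
    replace (ev (sg a)) with (vsub (ev a) (vsub (ev a) (ev (sg a)))).
    - apply span_sub.
      + apply span_mem, in_or_app. right. apply in_map, in_seq. lia.
      + apply (span_incl d); auto. intros y Hy; apply in_or_app; auto.
    - apply vext; intro i; unfold vsub; lra. }
  assert (Hinj : forall a a', In a Rep -> In a' Rep -> (a < a')%nat -> sg a <> sg a').
  { intros a a' Ha Ha' Hlt E. apply HRep in Ha, Ha'. destruct Ha as [Ha _].
    destruct Ha' as [Ha' Hr]. apply Hr.
    destruct (Hsg a Ha) as [_ [_ Hs1]]. destruct (Hsg a' Ha') as [_ [_ Hs2]].
    rewrite <- E in Hs2.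
    replace (ev a') with (vadd (vsub (vsub (ev a') (ev (sg a))) (vsub (ev a) (ev (sg a)))) (ev a)).
    - apply span_add.
      + apply (span_incl d). intros y Hy; apply in_or_app; auto.
        apply span_sub; auto.
      + apply span_mem, in_or_app. right. apply in_map, in_seq. lia.
    - apply vext; intro i; unfold vadd, vsub; lra. }
  assert (Hnd : NoDup (Rep ++ map sg Rep)).
  { apply NoDup_app.
    - apply NoDup_filter, seq_NoDup.
    - apply NoDup_map_NoDup_ForallPairs.
      + intros a a' Ha Ha' E. destruct (Nat.lt_trichotomy a a') as [H|[H|H]]; auto.
        * exfalso; exact (Hinj a a' Ha Ha' H E).
        * exfalso; exact (Hinj a' a Ha' Ha H (eq_sym E)).
      + apply NoDup_filter, seq_NoDup.
    - intros a Ha Hb. apply in_map_iff in Hb. destruct Hb as [a' [<- Ha']].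
      exact (Hnot a' Ha' Ha). }
  apply NoDup_incl_length with (l' := seq 0 (2 * k)) in Hnd.
  - rewrite length_app, length_map, length_seq in Hnd. lia.
  - intros a Ha. apply in_app_or in Ha. apply in_seq. destruct Ha as [Ha|Ha].
    + apply HRep in Ha. lia.
    + apply in_map_iff in Ha. destruct Ha as [a' [<- Ha']]. apply HRep in Ha'.
      destruct (Hsg a' (proj1 Ha')). lia.
Qed.


Definition Xeqb (x y : Dv) : bool := if excluded_middle_informative (x = y) then true else false.
Definition set_of (L : list Dv) : Dv -> bool :=
  fun x => fold_right (fun y acc => xorb (Xeqb x y) acc) false L.
Definition sxor (S S' : Dv -> bool) : Dv -> bool := fun x => xorb (S x) (S' x).
Definition trs (a : Dv) (S : Dv -> bool) : Dv -> bool := fun x => S (vsub x a).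

Lemma Xeqb_iff x y x' y' : (x = y <-> x' = y') -> Xeqb x y = Xeqb x' y'.
Proof.
  intro H. unfold Xeqb.
  destruct (excluded_middle_informative (x = y)), (excluded_middle_informative (x' = y'));
    auto; exfalso; tauto.
Qed.

Lemma Xeqb_refl x : Xeqb x x = true.
Proof. unfold Xeqb. destruct (excluded_middle_informative (x = x)); auto. Qed.

Lemma Xeqb_true x y : Xeqb x y = true -> x = y.
Proof. unfold Xeqb. destruct (excluded_middle_informative (x = y)); auto. discriminate. Qed.

Lemma set_of_app L L' : set_of (L ++ L') = sxor (set_of L) (set_of L').
Proof.
  apply functional_extensionality; intro x. unfold sxor, set_of.
  induction L; simpl; auto. rewrite IHL. symmetry. apply xorb_assoc.
Qed.

Lemma vsub_vadd_iff (x a y : Dv) : x = vadd a y <-> vsub x a = y.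
Proof.
  split; intro E.
  - subst. apply vext; intro i. unfold vsub, vadd; lra.
  - subst. apply vext; intro i. unfold vsub, vadd; lra.
Qed.

Lemma set_of_map a L : set_of (map (vadd a) L) = trs a (set_of L).
Proof.
  apply functional_extensionality; intro x. unfold trs, set_of.
  induction L; simpl; auto. rewrite IHL. f_equal. apply Xeqb_iff, vsub_vadd_iff.
Qed.

Lemma set_of_In L x : set_of L x = true -> In x L.
Proof.
  induction L; simpl; [discriminate|]. intro H.
  destruct (Xeqb x a) eqn:E.
  - left. symmetry. apply Xeqb_true; auto.
  - right. apply IHL. simpl in H. auto.
Qed.

(** * The set I of even finite subsets *)
Definition Iset := { S : Dv -> bool | exists L, Nat.even (length L) = true /\ S = set_of L }.

Lemma Iset_eq (A B : Iset) : proj1_sig A = proj1_sig B -> A = B.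
Proof.
  destruct A as [A HA], B as [B HB]; simpl. intro E. subst B. f_equal. apply proof_irrelevance.
Qed.

Lemma even_app (L L' : list Dv) : Nat.even (length L) = true -> Nat.even (length L') = true ->
  Nat.even (length (L ++ L')) = true.
Proof. intros H1 H2. rewrite length_app, Nat.even_add, H1, H2. reflexivity. Qed.

Definition Ixor (A B : Iset) : Iset.
Proof.
  refine (exist _ (sxor (proj1_sig A) (proj1_sig B)) _).
  destruct A as [A [L [HL ->]]], B as [B [L' [HL' ->]]]. simpl.
  exists (L ++ L'). split. apply even_app; auto. symmetry; apply set_of_app.
Defined.

Definition Itr (a : Dv) (A : Iset) : Iset.
Proof.
  refine (exist _ (trs a (proj1_sig A)) _).
  destruct A as [A [L [HL ->]]]. simpl.
  exists (map (vadd a) L). split. rewrite length_map; auto. symmetry; apply set_of_map.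
Defined.

Definition Iempty : Iset.
Proof. refine (exist _ (fun _ => false) _). exists []. split; reflexivity. Defined.

Definition Gc := (Iset * Dv)%type.
Definition Gmul (p q : Gc) : Gc := (Ixor (fst p) (Itr (snd p) (fst q)), vadd (snd p) (snd q)).
Definition Ginv (p : Gc) : Gc := (Itr (vneg (snd p)) (fst p), vneg (snd p)).
Definition Gone : Gc := (Iempty, vzero).

Lemma Gc_eq (p q : Gc) : proj1_sig (fst p) = proj1_sig (fst q) -> snd p = snd q -> p = q.
Proof.
  destruct p, q; simpl. intros E1 E2. f_equal; auto. apply Iset_eq; auto.
Qed.

Lemma GmulA x y z : Gmul x (Gmul y z) = Gmul (Gmul x y) z.
Proof.
  apply Gc_eq; simpl.
  - apply functional_extensionality; intro v. unfold sxor, trs.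
    rewrite xorb_assoc. f_equal. f_equal. f_equal. apply vext; intro i.
    unfold vsub, vadd; lra.
  - apply vext; intro i; unfold vadd; lra.
Qed.

Lemma Gmul1 x : Gmul Gone x = x.
Proof.
  apply Gc_eq; simpl.
  - apply functional_extensionality; intro v. unfold sxor, trs. simpl. f_equal.
    apply vext; intro i; unfold vsub, vzero; lra.
  - apply vext; intro i; unfold vadd, vzero; lra.
Qed.

Lemma GmulV x : Gmul (Ginv x) x = Gone.
Proof.
  apply Gc_eq; simpl.
  - apply functional_extensionality; intro v. unfold sxor, trs. simpl.
    replace (vsub v (vneg (snd x))) with (vsub v (vneg (snd x))) by reflexivity.
    apply xorb_nilpotent.
  - apply vext; intro i; unfold vadd, vneg, vzero; lra.
Qed.

Definition GG : group := Group Gc Gmul Ginv Gone GmulA Gmul1 GmulV.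

Definition F (x : Gc) : Dv -> bool := proj1_sig (fst x).

Definition term_rep (ts : list (list Dv * Dv)) : list Dv :=
  flat_map (fun p => fst p ++ map (vadd (snd p)) (fst p)) ts.

Definition short (m : nat) (S : Dv -> bool) : Prop :=
  exists ts, (length ts <= m)%nat /\ S = set_of (term_rep ts).

Lemma short_xor m m' S S' : short m S -> short m' S' -> short (m + m') (sxor S S').
Proof.
  intros [ts [H1 ->]] [ts' [H2 ->]]. exists (ts ++ ts'). split.
  - rewrite length_app; lia.
  - unfold term_rep. rewrite flat_map_app, set_of_app. reflexivity.
Qed.

Lemma term_rep_shift a ts :
  term_rep (map (fun p => (map (vadd a) (fst p), snd p)) ts) = map (vadd a) (term_rep ts).
Proof.
  unfold term_rep. induction ts; simpl; auto.
  rewrite IHts, !map_app, !map_map. f_equal. f_equal.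
  apply map_ext; intro y. apply vext; intro i; unfold vadd; lra.
Qed.

Lemma short_tr m a S : short m S -> short m (trs a S).
Proof.
  intros [ts [H1 ->]]. exists (map (fun p => (map (vadd a) (fst p), snd p)) ts). split.
  - rewrite length_map; auto.
  - rewrite term_rep_shift, set_of_map. reflexivity.
Qed.

Lemma short_term L a : short 1 (sxor (set_of L) (trs a (set_of L))).
Proof.
  exists [(L, a)]. split; auto. unfold term_rep. simpl. rewrite app_nil_r, set_of_app, set_of_map.
  reflexivity.
Qed.

Lemma short_mul m m' x y : short m (F x) -> short m' (F y) -> short (m + m') (F (Gmul x y)).
Proof.
  intros H1 H2. unfold F, Gmul; simpl. apply short_xor; auto. apply short_tr; auto.
Qed.

Lemma short_inv m x : short m (F x) -> short m (F (Ginv x)).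
Proof. intros H. unfold F, Ginv; simpl. apply short_tr; auto. Qed.

Lemma F_set x : exists L, F x = set_of L.
Proof. destruct (proj2_sig (fst x)) as [L [_ E]]. exists L. exact E. Qed.

Lemma short_sq x : short 1 (F (Gmul x x)).
Proof.
  destruct (F_set x) as [L HL]. unfold F, Gmul in *; simpl. rewrite HL. apply short_term.
Qed.

Definition Gcomm (x y : Gc) := Gmul (Gmul (Gmul x y) (Ginv x)) (Ginv y).

Lemma F_comm x y : F (Gcomm x y) =
  sxor (sxor (F x) (trs (snd y) (F x))) (sxor (F y) (trs (snd x) (F y))).
Proof.
  unfold F, Gcomm, Gmul, Ginv; simpl. apply functional_extensionality; intro v.
  unfold sxor, trs.
  replace (vsub (vsub v (vadd (snd x) (snd y))) (vneg (snd x))) with (vsub v (snd y))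
    by (apply vext; intro i; unfold vsub, vadd, vneg; lra).
  replace (vsub (vsub v (vadd (vadd (snd x) (snd y)) (vneg (snd x)))) (vneg (snd y))) with v
    by (apply vext; intro i; unfold vsub, vadd, vneg; lra).
  destruct (proj1_sig (fst x) v), (proj1_sig (fst x) (vsub v (snd y))),
    (proj1_sig (fst y) v), (proj1_sig (fst y) (vsub v (snd x))); reflexivity.
Qed.

Lemma snd_comm x y : snd (Gcomm x y) = vzero.
Proof. apply vext; intro i. unfold Gcomm, Gmul, Ginv, vadd, vneg, vzero; simpl. lra. Qed.

Lemma short_comm x y : short 2 (F (Gcomm x y)).
Proof.
  rewrite F_comm. destruct (F_set x) as [L HL]. destruct (F_set y) as [L' HL'].
  rewrite HL, HL'. apply (short_xor 1 1); apply short_term.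
Qed.


Definition ppar (p : Dv -> bool) (L : list Dv) : bool :=
  fold_right (fun y acc => xorb (p y) acc) false L.

Lemma ppar_app p L L' : ppar p (L ++ L') = xorb (ppar p L) (ppar p L').
Proof. induction L; simpl; auto. rewrite IHL. symmetry; apply xorb_assoc. Qed.

Lemma ppar_zero p : forall n M, (length M <= n)%nat -> (forall x, set_of M x = false) ->
  ppar p M = false.
Proof.
  induction n; intros M HM HZ.
  - destruct M; simpl in *; auto. lia.
  - destruct M as [|a M']; simpl; auto.
    assert (Ha : set_of M' a = true).
    { specialize (HZ a). unfold set_of in HZ |- *. simpl in HZ. rewrite Xeqb_refl in HZ.
      destruct (fold_right _ false M'); simpl in HZ; auto. }
    destruct (in_split _ _ (set_of_In _ _ Ha)) as [M1 [M2 ->]].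
    assert (H2 : ppar p (M1 ++ M2) = false).
    { apply IHn. rewrite length_app. simpl in HM. rewrite length_app in HM. simpl in HM. lia.
      intro x. specialize (HZ x). rewrite set_of_app. unfold sxor.
      change (set_of (a :: M1 ++ a :: M2) x) with (xorb (Xeqb x a) (set_of (M1 ++ a :: M2) x)) in HZ.
      rewrite set_of_app in HZ. unfold sxor in HZ.
      change (set_of (a :: M2) x) with (xorb (Xeqb x a) (set_of M2 x)) in HZ.
      destruct (Xeqb x a), (set_of M1 x), (set_of M2 x); auto. }
    rewrite ppar_app in H2 |- *. simpl.
    destruct (p a), (ppar p M1), (ppar p M2); auto.
Qed.

Lemma ppar_eq p L L' : set_of L = set_of L' -> ppar p L = ppar p L'.
Proof.
  intro E. assert (H : ppar p (L ++ L') = false).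
  { apply (ppar_zero p (length (L ++ L'))); auto. intro x. rewrite set_of_app, E.
    unfold sxor. apply xorb_nilpotent. }
  rewrite ppar_app in H. destruct (ppar p L), (ppar p L'); auto.
Qed.

Definition Tlist (k : nat) : list Dv := map ev (seq 0 (2 * k)).

Lemma short_T m k : short m (set_of (Tlist k)) -> (k <= m)%nat.
Proof.
  intros [ts [Hlen HT]]. apply NNPP; intro Hk.
  set (d := map snd ts).
  destruct (LB k d) as [a [Ha Hb]]. { unfold d. rewrite length_map. lia. }
  set (p := fun x => if excluded_middle_informative (in_span d (vsub x (ev a))) then true else false).
  assert (Hper : forall y dj, In dj d -> p (vadd dj y) = p y).
  { intros y dj Hdj. unfold p.
    destruct (excluded_middle_informative (in_span d (vsub (vadd dj y) (ev a)))) as [H1|H1],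
      (excluded_middle_informative (in_span d (vsub y (ev a)))) as [H2|H2]; auto; exfalso.
    - apply H2. replace (vsub y (ev a)) with (vsub (vsub (vadd dj y) (ev a)) dj).
      apply span_sub; auto. apply span_mem; auto.
      apply vext; intro i; unfold vsub, vadd; lra.
    - apply H1. replace (vsub (vadd dj y) (ev a)) with (vadd (vsub y (ev a)) dj).
      apply span_add; auto. apply span_mem; auto.
      apply vext; intro i; unfold vsub, vadd; lra. }
  assert (H0 : ppar p (term_rep ts) = false).
  { unfold term_rep. assert (Hts : forall q, In q ts -> In (snd q) d).
    { intros q Hq. apply in_map; auto. }
    clearbody d. clear HT Hlen. induction ts as [|q ts IH]; simpl; auto.
    rewrite !ppar_app, IH by (intros; apply Hts; simpl; auto).
    assert (E : ppar p (map (vadd (snd q)) (fst q)) = ppar p (fst q)).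
    { induction (fst q); simpl; auto. rewrite IHl, Hper; auto. apply Hts; simpl; auto. }
    rewrite E. destruct (ppar p (fst q)); auto. }
  assert (H1 : forall n, (n <= 2 * k)%nat -> ppar p (map ev (seq 0 n)) = Nat.ltb a n).
  { induction n; intro Hn; [simpl; auto|].
    rewrite seq_S, map_app, ppar_app, IHn by lia. simpl.
    assert (Hpn : p (ev n) = Nat.eqb n a).
    { unfold p. destruct (Nat.eqb n a) eqn:Ena.
      - apply Nat.eqb_eq in Ena. subst n.
        destruct (excluded_middle_informative (in_span d (vsub (ev a) (ev a)))); auto.
        exfalso. apply n. replace (vsub (ev a) (ev a)) with vzero. apply span_zero.
        apply vext; intro i; unfold vsub, vzero; lra.
      - apply Nat.eqb_neq in Ena.
        destruct (excluded_middle_informative (in_span d (vsub (ev n) (ev a)))) as [Hs|]; auto.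
        exfalso. apply (Hb n); auto; try lia.
        replace (vsub (ev a) (ev n)) with (vscale (-1) (vsub (ev n) (ev a))).
        apply span_scale; auto. apply vext; intro i; unfold vscale, vsub; lra. }
    rewrite Hpn. destruct (Nat.ltb a n) eqn:E1, (Nat.eqb n a) eqn:E2, (Nat.ltb a (S n)) eqn:E3;
      auto; apply Nat.ltb_lt in E1 || apply Nat.ltb_ge in E1;
      apply Nat.eqb_eq in E2 || apply Nat.eqb_neq in E2;
      apply Nat.ltb_lt in E3 || apply Nat.ltb_ge in E3; lia. }
  pose proof (ppar_eq p _ _ HT) as E. rewrite H0 in E. unfold Tlist in E.
  rewrite H1 in E by lia. apply Nat.ltb_ge in E. lia.
Qed.


Lemma gpow_empty c m : @gpow GG (Iempty, c) m = (Iempty, vscale (INR m) c).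
Proof.
  induction m.
  - apply Gc_eq; simpl; auto. apply vext; intro i; unfold vscale, vzero; simpl; lra.
  - simpl gpow. rewrite IHm. apply Gc_eq; simpl.
    + apply functional_extensionality; intro v; reflexivity.
    + apply vext; intro i; unfold vadd, vscale. destruct m; simpl; lra.
Qed.

Lemma div_empty d : forall n, exists z, @gpow GG z (S n) = (Iempty, d).
Proof.
  intro n. exists (Iempty, vscale (/ INR (S n)) d). rewrite gpow_empty. f_equal.
  apply vext; intro i; unfold vscale. field. apply not_0_INR. lia.
Qed.

Definition Iof (L : list Dv) (HL : Nat.even (length L) = true) : Iset :=
  exist _ (set_of L) (ex_intro _ L (conj HL eq_refl)).

Lemma ev01 : Xeqb (ev 0) (ev 1) = false.
Proof.
  unfold Xeqb. destruct (excluded_middle_informative (ev 0 = ev 1)) as [E|]; auto.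
  apply ev_eq in E. discriminate.
Qed.

Lemma NFQ_GG : NFQ GG.
Proof.
  split.
  - exists (Iof [ev 0; ev 1] eq_refl, vzero). intro E.
    apply (f_equal (fun q : Gc => proj1_sig (fst q) (ev 0))) in E. simpl in E.
    unfold set_of in E. simpl in E. rewrite Xeqb_refl, ev01 in E. discriminate.
  - intros H HS [l Hl] [x0 Hx0]. apply Hx0. clear Hx0. revert x0.
    destruct HS as [H1 [Hm Hi]].
    assert (HS : is_subgroup GG H) by (split; auto).
    assert (Hd : forall d, H (Iempty, d)).
    { intro d. apply (divisible_in_fi GG H l); auto. apply div_empty. }
    assert (Hpair : forall a b (HL : Nat.even (length [a; b]) = true), H (Iof [a; b] HL, vzero)).
    { intros a b HL.
      set (w := vscale (/ 2) (vsub b a)).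
      set (cc := (Iof [a; vadd w a] eq_refl, vzero) : Gc).
      set (z := (Iempty, w) : Gc).
      assert (E : Gcomm cc z = (Iof [a; b] HL, vzero)).
      { apply Gc_eq; [|apply snd_comm].
        change (F (Gcomm cc z) = set_of [a; b]). rewrite F_comm.
        unfold cc, z, F; simpl. rewrite <- set_of_map. simpl.
        replace (vadd w (vadd w a)) with b
          by (apply vext; intro i; unfold w, vadd, vscale, vsub; lra).
        apply functional_extensionality; intro v. unfold sxor, trs, set_of; simpl.
        destruct (Xeqb v a), (Xeqb v (vadd w a)), (Xeqb v b); reflexivity. }
      rewrite <- E. unfold Gcomm. apply (Hm _ (Ginv z)).
      - apply (divisible_in_fi GG H l); auto. intro n.
        destruct (div_empty w n) as [z' Hz'].
        exists (@gmul GG (@gmul GG cc z') (@ginv GG cc)). rewrite gpow_conj.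
        rewrite Hz'. reflexivity.
      - apply Hi, Hd. }
    assert (Heven : forall n L (A : Iset), (length L <= n)%nat -> Nat.even (length L) = true ->
        proj1_sig A = set_of L -> H (A, vzero)).
    { induction n; intros L A HLn HLe HA.
      - destruct L; [|simpl in HLn; lia].
        replace (A, vzero) with Gone. exact H1.
        apply Gc_eq; [simpl; rewrite HA; reflexivity | reflexivity].
      - destruct L as [|a [|b L']].
        + replace (A, vzero) with Gone. exact H1.
          apply Gc_eq; [simpl; rewrite HA; reflexivity | reflexivity].
        + discriminate.
        + assert (HL2 : Nat.even (length [a; b]) = true) by reflexivity.
          assert (HL' : Nat.even (length L') = true) by (simpl in HLe; auto).
          replace (A, vzero) with (Gmul (Iof [a; b] HL2, vzero) (Iof L' HL', vzero)).
          * apply Hm. apply Hpair. apply (IHn L'); simpl in *; auto; lia.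
          * apply Gc_eq; simpl.
            -- rewrite HA. apply functional_extensionality; intro v.
               unfold sxor, trs, set_of; simpl.
               replace (vsub v vzero) with v by (apply vext; intro i; unfold vsub, vzero; lra).
               rewrite xorb_false_r. apply xorb_assoc.
            -- apply vext; intro i; unfold vadd, vzero; lra. }
    intros [A d].
    destruct (proj2_sig A) as [L [HL E]].
    replace (A, d) with (Gmul (A, vzero) (Iempty, d)).
    + apply Hm; auto. apply (Heven (length L) L); auto.
    + apply Gc_eq; simpl.
      * apply functional_extensionality; intro v. unfold sxor, trs. simpl. apply xorb_false_r.
      * apply vext; intro i; unfold vadd, vzero; lra.
Qed.

Section BadUP.
Variable U : UF.

Definition Tsig (k : nat) : Iset.
Proof.
  refine (Iof (Tlist k) _). unfold Tlist. rewrite length_map, length_seq.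
  rewrite Nat.even_mul. reflexivity.
Defined.

Lemma rep_mul (a b : UPc GG U) :
  uf U (fun n => rep GG U (UPmul GG U a b) n = Gmul (rep GG U a n) (rep GG U b n)).
Proof. apply rep_mk. Qed.
Lemma rep_inv (a : UPc GG U) :
  uf U (fun n => rep GG U (UPinv GG U a) n = Ginv (rep GG U a n)).
Proof. apply rep_mk. Qed.

Lemma bad_UP : bad (UPgroup GG U).
Proof.
  set (N := fun c : UPc GG U => exists m, uf U (fun n => short m (F (rep GG U c n)))).
  apply (bad_of_quot (UPgroup GG U) N (mk GG U (fun n => (Tsig n, vzero)))).
  - split; [|split].
    + exists 0%nat. apply (uf_mono U _ _ (rep_mk GG U (fun _ => gone))).
      intros n e. change (rep GG U (UPone GG U) n = Gone) in e.
      change (short 0 (F (rep GG U (UPone GG U) n))). rewrite e. exists []. split; auto.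
    + intros a b [m Ha] [m' Hb]. exists (m + m')%nat.
      apply (uf_mono U _ _ (uf_and3 U _ _ _ (rep_mul a b) Ha Hb)).
      intros n [e [h1 h2]]. change (short (m + m') (F (rep GG U (UPmul GG U a b) n))).
      rewrite e. apply short_mul; auto.
    + intros a [m Ha]. exists m.
      apply (uf_mono U _ _ (uf_and U _ _ (rep_inv a) Ha)).
      intros n [e h]. change (short m (F (rep GG U (UPinv GG U a) n))).
      rewrite e. apply short_inv; auto.
  - intro x. exists 1%nat. apply (uf_mono U _ _ (rep_mul x x)).
    intros n e. change (short 1 (F (rep GG U (UPmul GG U x x) n))). rewrite e. apply short_sq.
  - intros x y. exists 2%nat.
    set (c1 := UPmul GG U x y). set (c2 := UPmul GG U c1 (UPinv GG U x)).
    apply (uf_mono U _ _ (uf_and3 U _ _ _ (rep_mul c2 (UPinv GG U y))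
             (uf_and3 U _ _ _ (rep_mul c1 (UPinv GG U x)) (rep_mul x y) (rep_inv x))
             (rep_inv y))).
    intros n [e1 [[e2 [e3 e4]] e5]].
    change (short 2 (F (rep GG U (UPmul GG U c2 (UPinv GG U y)) n))).
    unfold c2, c1 in *.
    rewrite e1, e2, e3, e4, e5. apply short_comm.
  - intros [m Hm].
    pose proof (rep_mk GG U (fun n => (Tsig n, vzero))) as Hr.
    destruct (uf_ex U _ (uf_and3 U _ _ _ Hm Hr (uf_cof U (S m)))) as [n [h1 [h2 h3]]].
    rewrite h2 in h1. apply short_T in h1. lia.
Qed.
End BadUP.

Theorem mainTheorem2 :
  ~ elementary_class NFQ /\
  (exists G : group, NFQ G /\ ~ NFQ (pow_omega G)).
Proof.
  destruct UF_exists as [U _].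
  split.
  - intros [T [_ HT]]. apply (bad_not_NFQ _ (bad_UP U)). apply HT.
    intros phi Hphi. apply models_UP. apply HT; auto. apply NFQ_GG.
  - exists GG. split. apply NFQ_GG. apply bad_not_NFQ, (bad_pow GG U), bad_UP.
Qed.
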